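(* Let $(X,d,\mu)$, $p$, $\underline{Q}_\mu$ be as in the context, let $\theta_2\in(0,\min\{p,\underline{Q}_\mu\})$ and let $S^2\in\mathcal{ADR}_{\theta_2}(X)$ be a closed set. Then for each $c\ge1$ there is a constant $C>0$ such that whenever $\{B_{r_i}(x_i)\}_{i=1}^{M}$, $M\in\mathbb N$, is an $(S^2,c)$-nice family with $\max_i8cr_i\le1$, then for every $f\in L_p(\mathcal H_{\theta_2}\lfloor_{S^2})$, $$\sum_{i=1}^{M}\frac{\mu(B_{r_i}(x_i))}{r_i^p}\Big(\mathcal E_{\mathcal H_{\theta_2}\lfloor_{S^2}}(f,B_{2cr_i}(x_i))\Big)^p\le C\|f|\mathrm B^{1-\theta_2/p}_p(S^2)\|^p.$$
   Context: Standing setting: $(X,d)$ complete separable metric space, $\mu$ a Borel regular locally finite outer measure, $\operatorname{supp}\mu=X$, uniformly locally doubling (for every $R>0$, $\sup_{r\in(0,R]}\sup_x\mu(B_{2r}(x))/\mu(B_r(x))<\infty$). Balls are closed, $B_r(x)=\{y:d(x,y)\le r\}$, $B_k(x)=B_{2^{-k}}(x)$. A fixed $p\in(1,\infty)$; $X$ supports a weak local $(1,p)$-Poincaré inequality (for every $R>0$ there are $C,\lambda\ge1$ with $\inf_c\frac{1}{\mu(B_r(x))}\int_{B_r(x)}|f-c|d\mu\le Cr(\frac{1}{\mu(B_{\lambda r}(x))}\int_{B_{\lambda r}(x)}(\operatorname{lip}f)^pd\mu)^{1/p}$ for Lipschitz $f$, $x\in X$, $r\in(0,R]$). $\underline{Q}_\mu$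 is the infimum of $Q>0$ such that for every $R>0$ there is $C$ with $(r_{B'}/r_B)^Q\le C\mu(B')/\mu(B)$ for balls $B'\subset B$, $0<r_{B'}\le r_B\le R$. Notation: $\mathcal E_{\mathfrak m}(g,G):=\inf_{c\in\mathbb R}\mathfrak m(G)^{-1}\int_G|g-c|d\mathfrak m$ if $\mathfrak m(G)>0$, $0$ otherwise; $\mathfrak m\lfloor_S(E)=\mathfrak m(E\cap S)$. $\mathcal H_{\vartheta,\delta}(E):=\inf\{\sum\mu(B_{r_i}(x_i))r_i^{-\vartheta}:E\subset\bigcup B_{r_i}(x_i),0<r_i<\delta\}$, $\mathcal H_\vartheta=\lim_{\delta\to0}\mathcal H_{\vartheta,\delta}$. $\mathcal{ADR}_\vartheta(X)$: closed $S'$ with $\varkappa_1\mu(B_r(x))r^{-\vartheta}\le\mathcal H_\vartheta(B_r(x)\cap S')\le\varkappa_2\mu(B_r(x))r^{-\vartheta}$ for $x\in S'$, $r\in(0,1]$. Besov norm: $\|f|\mathrm B^s_p(S^2)\|:=\|f|L_p(\mathcal H_{\theta_2}\lfloor_{S^2})\|+(\sum_{k\ge1}2^{ksp}\int_{S^2}(\mathcal E_{\mathcal H_{\theta_2}\lfloor_{S^2}}(f,B_k(x)))^pd\mathcal H_{\theta_2}(x))^{1/p}$. A finite family of closed balls $\{B_{r_i}(x_i)\}$ is $(S^2,c)$-nice if the balls are pairwise disjoint, $\max_ir_i\le1$, and $B_{cr_i}(x_i)\cap S^2\ne\emptyset$ for all $i$. *)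

(* Defs.v *)
From HB Require Import structures.
From mathcomp Require Import all_boot all_order all_algebra.
From mathcomp Require Import all_classical all_reals all_analysis.

Set Implicit Arguments.
Unset Strict Implicit.
Unset Printing Implicit Defensive.

Import Order.TTheory GRing.Theory Num.Theory.
Local Open Scope classical_set_scope.
Local Open Scope ring_scope.

Section MetricMeasure.
Context {R : realType} {disp : measure_display} {X : measurableType disp}.
Variable d : X -> X -> R.

Definition is_metric : Prop :=
  [/\ forall x, d x x = 0,
      forall x y, d x y = d y x,
      forall x y z, d x z <= d x y + d y z
    & forall x y, d x y = 0 -> x = y].

Definition d_complete : Prop :=
  forall u : nat -> X,
    (forall e, 0 < e -> exists N, forall m n, (N <= m)%N -> (N <= n)%N ->
        d (u m) (u n) < e) ->
    exists l, forall e, 0 < e -> exists N, forall n, (N <= n)%N -> d (u n) l < e.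

Definition d_separable : Prop :=
  exists D : nat -> X, forall x e, 0 < e -> exists n, d x (D n) < e.

Definition d_open (A : set X) : Prop :=
  forall x, A x -> exists2 e, 0 < e & forall y, d x y < e -> A y.

Definition d_closed (A : set X) : Prop := d_open (~` A).

Definition d_borel : Prop := (measurable : set (set X)) = <<s d_open >>.

Definition cball (x : X) (r : R) : set X := [set y | d x y <= r].

Definition d_lipschitz (f : X -> R) : Prop :=
  exists L : R, forall x y, `|f x - f y| <= L * d x y.

Definition lip (f : X -> R) (x : X) : \bar R :=
  ereal_sup [set ereal_inf [set ereal_sup [set ((`|f y - f x| / r)%:E) | y in cball x r]
                            | r in [set r : R | 0 < r < delta]]
            | delta in [set delta : R | 0 < delta]].

Definition Eosc (m : set X -> \bar R) (g : X -> R) (G : set X) : \bar R :=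
  if (0 < m G)%E then
    ereal_inf [set (((fine (m G))^-1)%:E * \int[m]_(y in G) (`|g y - c|)%:E)%E
              | c in [set: R]]
  else 0%E.

Definition unif_loc_doubling (mu : set X -> \bar R) : Prop :=
  forall R0 : R, 0 < R0 -> exists C : R, forall r x, 0 < r <= R0 ->
    (mu (cball x (2 * r)) <= C%:E * mu (cball x r))%E.

Definition loc_poincare (mu : set X -> \bar R) (p : R) : Prop :=
  forall R0 : R, 0 < R0 -> exists C lam : R, 1 <= C /\ 1 <= lam /\
    forall f, d_lipschitz f -> forall x r, 0 < r <= R0 ->
      (Eosc mu f (cball x r) <=
       (C * r)%:E *
         ((((fine (mu (cball x (lam * r))))^-1)%:E *
            \int[mu]_(y in cball x (lam * r)) (lip f y `^ p)) `^ (p^-1)))%E.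

Definition lowQ_admissible (mu : set X -> \bar R) (Q : R) : Prop :=
  0 < Q /\
  forall R0 : R, 0 < R0 -> exists C : R,
    forall x' r' x r, cball x' r' `<=` cball x r -> 0 < r' <= r -> r <= R0 ->
      (((r' / r) `^ Q)%:E <= C%:E * (mu (cball x' r') / mu (cball x r)))%E.

(** lower Q_mu = inf of admissible Q (in extended reals, +oo if none). *)
Definition lowQ (mu : set X -> \bar R) : \bar R :=
  ereal_inf [set Q%:E | Q in lowQ_admissible mu].

(** H_{theta,delta}(E): countable (or finite, via the index set I) covers. *)
Definition Hcontent_delta (mu : set X -> \bar R) (theta delta : R) (E : set X)
  : \bar R :=
  ereal_inf [set s | exists (I : set nat) (xs : nat -> X) (rs : nat -> R),
     [/\ forall i, I i -> 0 < rs i < delta,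
         E `<=` \bigcup_(i in I) cball (xs i) (rs i)
       & s = (\sum_(i <oo | i \in I) (mu (cball (xs i) (rs i)) *
                                       ((rs i) `^ (- theta))%:E))%E]].

(** H_theta = lim_{delta -> 0} H_{theta,delta} (a monotone limit = sup). *)
Definition Hmeas (mu : set X -> \bar R) (theta : R) (E : set X) : \bar R :=
  ereal_sup [set Hcontent_delta mu theta delta E | delta in [set delta : R | 0 < delta]].

Definition ADR (mu : set X -> \bar R) (theta : R) (S : set X) : Prop :=
  d_closed S /\
  exists k1 k2 : R, 0 < k1 /\ 0 < k2 /\
    forall x r, S x -> 0 < r <= 1 ->
      (k1%:E * mu (cball x r) * (r `^ (- theta))%:E <= Hmeas mu theta (cball x r `&` S)
       /\ Hmeas mu theta (cball x r `&` S) <= k2%:E * mu (cball x r) * (r `^ (- theta))%:E)%E.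

Definition in_Lp (nu : set X -> \bar R) (p : R) (f : X -> R) : Prop :=
  measurable_fun setT f /\ (\int[nu]_x ((`|f x|%:E) `^ p) < +oo)%E.

(** Besov norm  || f | B^s_p(S) || w.r.t. the measure nu (= H_theta restricted to S). *)
Definition besov_norm (nu : set X -> \bar R) (S : set X) (s p : R) (f : X -> R)
  : \bar R :=
  ((\int[nu]_(x in S) ((`|f x|%:E) `^ p)) `^ (p^-1) +
   (\sum_(1 <= k <oo)
      ((2 `^ (k%:R * s * p))%:E *
       \int[nu]_(x in S) (Eosc nu f (cball x (2 `^ (- k%:R))) `^ p))) `^ (p^-1))%E.

Definition nice_family (S : set X) (c : R) (M : nat) (xs : 'I_M -> X)
  (rs : 'I_M -> R) : Prop :=
  [/\ forall i, 0 < rs i,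
      forall i j, i != j -> cball (xs i) (rs i) `&` cball (xs j) (rs j) = set0,
      forall i, rs i <= 1
    & forall i, cball (xs i) (c * rs i) `&` S !=set0].

End MetricMeasure.

(* Main.v *)
Require Import Defs.
From HB Require Import structures.
From mathcomp Require Import all_boot all_order all_algebra.
From mathcomp Require Import all_classical all_reals all_analysis.
From mathcomp Require Import measurable_realfun.
From mathcomp Require Import ring lra.
Import Order.TTheory GRing.Theory Num.Theory.
Set Implicit Arguments.
Unset Strict Implicit.
Local Open Scope classical_set_scope.
Local Open Scope ring_scope.


Section Aux.
Context {R : realType} {disp : measure_display} {X : measurableType disp}.

Lemma dist_ge0 (d : X -> X -> R) : is_metric d -> forall x y, 0 <= d x y.
Proof.
move=> [d0 ds dt _] x y.
have := dt x y x; rewrite d0 (ds y x) -mulr2n => h.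
by rewrite -(@pmulrn_lge0 _ _ 2).
Qed.

Lemma cball_meas (d : X -> X -> R) : is_metric d -> d_borel d ->
  forall x r, measurable (cball d x r).
Proof.
move=> hm hb x r.
rewrite -(setCK (cball d x r)); apply: measurableC.
rewrite hb; apply: sub_gen_smallest => y /= hy.
have hy' : r < d x y by rewrite ltNge; apply/negP.
exists (d x y - r); first by rewrite subr_gt0.
move=> z hz /=; apply/negP; rewrite -ltNge.
case: hm => _ ds dt _.
have := dt x z y; rewrite (ds z y) => h.
by move: hz; rewrite ltrBrDr => hz; rewrite -(ltrD2r (d y z)); apply: (lt_le_trans _ h); rewrite addrC.
Qed.

Lemma closed_meas (d : X -> X -> R) : d_borel d -> forall S, d_closed d S -> measurable S.
Proof.
move=> hb S hS; rewrite -(setCK S); apply: measurableC.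
by rewrite hb; apply: sub_gen_smallest.
Qed.

Local Open Scope ereal_scope.

Lemma le_integral_nm (mu : {measure set X -> \bar R}) (D : set X) (f g : X -> \bar R) :
  (forall x, D x -> 0 <= f x) -> (forall x, D x -> f x <= g x) ->
  \int[mu]_(x in D) f x <= \int[mu]_(x in D) g x.
Proof.
move=> f0 fg.
have g0 : forall x, D x -> 0 <= g x by move=> x Dx; exact: le_trans (f0 x Dx) (fg x Dx).
rewrite (ge0_integralE mu f0) (ge0_integralE mu g0).
apply: ereal_sup_le => _ [h /= hf <-]; exists h => //= x.
apply: le_trans (hf x) _; rewrite /patch; case: ifP => // /set_mem Dx.
exact: fg.
Qed.

End Aux.

Section Aux.
Context {R : realType} {disp : measure_display} {X : measurableType disp}.
Local Open Scope ereal_scope.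

Lemma Eosc_ge0 (nu : {measure set X -> \bar R}) f G : 0 <= Eosc nu f G.
Proof.
rewrite /Eosc; case: ifP => // _.
apply: le_ereal_inf_tmp => _ [c _ <-].
apply: mule_ge0; last by apply: integral_ge0 => x _.
by rewrite lee_fin invr_ge0 fine_ge0.
Qed.

Lemma Eosc_mono (nu : {measure set X -> \bar R}) (f : X -> R) (G G' : set X) :
  measurable G -> measurable G' -> G `<=` G' -> 0 < nu G -> nu G' < +oo ->
  measurable_fun setT f ->
  Eosc nu f G <= ((fine (nu G') / fine (nu G))%R)%:E * Eosc nu f G'.
Proof.
move=> mG mG' GG' nuG nuG' mf.
have nuG'0 : 0 < nu G' by apply: lt_le_trans nuG _; apply: le_measure => //; rewrite inE.
have nuGf : nu G < +oo by apply: le_lt_trans nuG'; apply: le_measure => //; rewrite inE.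
have a0 : (0 < fine (nu G))%R by apply: fine_gt0; rewrite nuG nuGf.
have b0 : (0 < fine (nu G'))%R by apply: fine_gt0; rewrite nuG'0 nuG'.
rewrite /Eosc nuG nuG'0.
set S1 := ereal_inf _; set S2 := ereal_inf _.
set l := (fine (nu G') / fine (nu G))%R.
have l0 : (0 < l)%R by rewrite divr_gt0.
suff h : (l^-1)%:E * S1 <= S2.
  have -> : S1 = l%:E * ((l^-1)%:E * S1) by rewrite muleA -EFinM mulfV ?gt_eqF// mul1e.
  by apply: lee_wpmul2l => //; rewrite lee_fin ltW.
apply: le_ereal_inf_tmp => _ [c _ <-].
have h1 : S1 <= ((fine (nu G))^-1)%:E * \int[nu]_(y in G) (`|f y - c|%R)%:E.
  by apply: ereal_inf_lbound; exists c.
have h2 : \int[nu]_(y in G) (`|f y - c|%R)%:E <= \int[nu]_(y in G') (`|f y - c|%R)%:E.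
  apply: ge0_subset_integral => //.
  apply/measurable_EFinP; apply: measurableT_comp => //.
  apply: measurable_funB => //; exact: measurable_funS mf.
rewrite lee_pdivrMl //.
apply: (le_trans h1).
rewrite muleA -EFinM.
have -> : (l * (fine (nu G'))^-1 = (fine (nu G))^-1)%R.
  by rewrite /l mulrAC mulfV ?gt_eqF// mul1r.
by apply: lee_wpmul2l => //; rewrite lee_fin invr_ge0 ltW.
Qed.

End Aux.

Section Aux.
Context {R : realType} {disp : measure_display} {X : measurableType disp}.
Local Open Scope ereal_scope.

Lemma dbl_iter (d : X -> X -> R) (mu : {measure set X -> \bar R}) (D : R) (m : nat) :
  (1 <= D)%R ->
  (forall (x : X) (r : R), (0 < r <= 2^+m)%R -> mu (cball d x (2 * r)) <= D%:E * mu (cball d x r)) ->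
  forall n, (n <= m)%N -> forall (x : X) (r : R), (0 < r)%R -> (r <= 1)%R ->
    mu (cball d x (2^+n * r)) <= (D^+n)%:E * mu (cball d x r).
Proof.
move=> D1 hD; elim=> [|n IH] hn x r r0 r1.
  by rewrite expr0 mul1r mul1e.
have h2 : (0 < 2^+n * r <= 2^+m)%R.
  rewrite mulr_gt0 ?exprn_gt0 //=.
  apply: (@le_trans _ _ (2^+n * 1)%R); first by rewrite ler_wpM2l ?exprn_ge0.
  by rewrite mulr1 ler_eXn2l ?(ltnW hn) // ltr1n.
have -> : (2^+n.+1 * r = 2 * (2^+n * r))%R by rewrite exprS mulrA.
apply: le_trans (hD _ _ h2) _.
have -> : ((D^+n.+1)%:E = D%:E * (D^+n)%:E)%E by rewrite exprS EFinM.
rewrite -muleA; apply: lee_wpmul2l; first by rewrite lee_fin (le_trans _ D1).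
exact: IH (ltnW hn) x r r0 r1.
Qed.

Lemma dblm (d : X -> X -> R) (mu : {measure set X -> \bar R}) (D : R) (m : nat) :
  (forall (x : X) (r : R), measurable (cball d x r)) ->
  (1 <= D)%R ->
  (forall (x : X) (r : R), (0 < r <= 2^+m)%R -> mu (cball d x (2 * r)) <= D%:E * mu (cball d x r)) ->
  forall (x : X) (r t : R), (0 < r)%R -> (r <= 1)%R -> (t <= 2^+m * r)%R ->
    mu (cball d x t) <= (D^+m)%:E * mu (cball d x r).
Proof.
move=> mB D1 hD x r t r0 r1 tr.
apply: (le_trans _ (dbl_iter D1 hD (leqnn m) x r0 r1)).
apply: le_measure; rewrite ?inE //.
by move=> y /= hy; apply: le_trans tr.
Qed.

End Aux.

Section Real.
Context {R : realType}.

Lemma key_real (p th c r w : R) : 0 < th -> th < p -> 0 < c -> 0 < r -> 0 < w ->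
  c * r * w <= 1 -> 1 <= 8 * c * w * r ->
  (r `^ p)^-1 <= (8 * c) `^ p * w `^ (p - th) * (c * r) `^ (- th).
Proof.
move=> th0 thp c0 r0 w0 h1 h2.
have p0 : 0 < p by apply: lt_trans thp.
have rp : 0 < r `^ p by apply: powR_gt0.
rewrite -(@ler_pM2l _ (r `^ p)) // mulfV ?gt_eqF //.
rewrite powRB ?implybT ?gt_eqF // powRN.
have e1 : r `^ p * ((8 * c) `^ p * (w `^ p / w `^ th) * ((c * r) `^ th)^-1)
   = (8 * c * w * r) `^ p / ((c * r * w) `^ th).
  rewrite !powRM ?mulr_ge0 ?ltW //.
  by field; rewrite ?gt_eqF ?mulr_gt0 ?powR_gt0.
rewrite e1 ler_pdivlMr ?powR_gt0 ?mulr_gt0 // mul1r.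
apply: (le_trans (y := 1)).
  have := @ge0_ler_powR R th (ltW th0) (c * r * w) 1.
  rewrite powR1 => -> //; rewrite nnegrE ?mulr_ge0 ?ltW //.
have := @ge0_ler_powR R p (ltW p0) 1 (8 * c * w * r).
rewrite powR1 => -> //; rewrite nnegrE ?mulr_ge0 ?ltW //.
Qed.

End Real.

Section Real.
Context {R : realType}.

Lemma exists_pow2 (x : R) : exists m : nat, x <= 2^+m.
Proof.
exists (Num.truncn x).+1.
apply: (le_trans (ltW (truncnS_gt x))).
rewrite -natrX ler_nat; apply: ltnW; exact: ltn_expl.
Qed.

Lemma exists_scale (a : R) : 0 < a -> 2 * a <= 1 ->
  exists k : nat, (1 <= k)%N /\ a <= (2^+k)^-1 /\ (2^+k)^-1 < 2 * a.
Proof.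
move=> a0 a2.
pose P := fun k : nat => a * 2^+k <= 1.
have P1 : P 1%N by rewrite /P expr1 mulrC.
have [B hB] := exists_pow2 (a^-1).
have ub : forall k, P k -> (k <= B)%N.
  move=> k; rewrite /P => hk.
  have : (2:R)^+k <= 2^+B.
    by apply: le_trans hB; rewrite -ler_pdivlMl // mulr1 in hk.
  by rewrite ler_eXn2l ?ltr1n.
case: (ex_maxnP (ex_intro _ 1%N P1) ub) => k Pk maxk.
exists k; split; first exact: maxk.
have e2 : (0:R) < 2^+k by apply: exprn_gt0.
split.
  by rewrite -(ler_pM2r e2) mulVf ?gt_eqF.
have : ~~ P k.+1.
  apply/negP => /maxk; by rewrite ltnn.
rewrite /P -ltNge exprS => h.
rewrite -(ltr_pM2r e2) mulVf ?gt_eqF //.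
have -> : 2 * a * 2^+k = a * (2 * 2^+k) by ring.
exact: h.
Qed.

End Real.

Lemma poweR_le (R : realType) (x y : \bar R) (p : R) : (0 <= p)%R -> (0 <= x)%E ->
  (x <= y)%E -> (x `^ p <= y `^ p)%E.
Proof.
move=> p0 x0 xy; apply: gt0_ler_poweR => //.
- by rewrite in_itv /= leey andbT.
- by rewrite in_itv /= leey andbT (le_trans x0 xy).
Qed.
Section Main.
Context {R : realType} {disp : measure_display} {X : measurableType disp}.
Variables (d : X -> X -> R) (mu nu : {measure set X -> \bar R}) (p th : R) (S : set X) (c : R).
Hypothesis hm : is_metric d.
Hypothesis hb : d_borel d.
Hypothesis hfin : forall x r, (mu (cball d x r) < +oo)%E.
Hypothesis hpos : forall x r, 0 < r -> (0 < mu (cball d x r))%E.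
Hypothesis hp1 : 1 < p.
Hypothesis th0 : 0 < th.
Hypothesis thp : th < p.
Hypothesis hSc : d_closed d S.
Variables k1 k2 : R.
Hypothesis k10 : 0 < k1.
Hypothesis k20 : 0 < k2.
Hypothesis hadr : forall x r, S x -> 0 < r <= 1 ->
      (k1%:E * mu (cball d x r) * (r `^ (- th))%:E <= Hmeas d mu th (cball d x r `&` S)
       /\ Hmeas d mu th (cball d x r `&` S) <= k2%:E * mu (cball d x r) * (r `^ (- th))%:E)%E.
Hypothesis hnu : forall E, measurable E -> nu E = Hmeas d mu th (E `&` S).
Hypothesis hc : 1 <= c.
Variable m : nat.
Hypothesis hm16 : 16 * c <= 2^+m.
Variable D : R.
Hypothesis D1 : 1 <= D.
Hypothesis hD : forall (x : X) (r : R), 0 < r <= 2^+m ->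
  (mu (cball d x (2 * r)) <= D%:E * mu (cball d x r))%E.

Local Notation B := (cball d).

Lemma mB (x : X) (r : R) : measurable (B x r).
Proof. exact: (cball_meas hm hb). Qed.

Lemma mS : measurable S.
Proof. exact: (closed_meas hb hSc). Qed.

Lemma dsym x y : d x y = d y x.
Proof. by case: hm. Qed.

Lemma dtri x y z : d x z <= d x y + d y z.
Proof. by case: hm. Qed.

Lemma c0 : 0 < c.
Proof. exact: lt_le_trans ltr01 hc. Qed.

Lemma p0 : 0 < p.
Proof. exact: lt_trans ltr01 hp1. Qed.

Lemma mu_ge0 Y : (0 <= mu Y)%E.
Proof. exact: measure_ge0. Qed.

Lemma muE (x : X) (r : R) : mu (B x r) = (fine (mu (B x r)))%:E.
Proof. by rewrite fineK // ge0_fin_numE ?mu_ge0. Qed.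

Lemma muf_gt0 (x : X) (r : R) : 0 < r -> 0 < fine (mu (B x r)).
Proof. by move=> r0; apply: fine_gt0; rewrite hpos ?hfin. Qed.

Lemma muf_ge0 (x : X) (r : R) : 0 <= fine (mu (B x r)).
Proof. exact: fine_ge0 (mu_ge0 _). Qed.

Lemma nuIS Y : measurable Y -> nu (Y `&` S) = nu Y.
Proof.
move=> mY; rewrite hnu; last exact: measurableI mY mS.
rewrite hnu //.
by rewrite -setIA setIid.
Qed.

Lemma nu_lo (x : X) (r : R) : S x -> 0 < r <= 1 ->
  ((k1 * fine (mu (B x r)) * r `^ (- th))%:E <= nu (B x r))%E.
Proof.
move=> Sx hr; rewrite hnu; last exact: mB.
have [h _] := hadr Sx hr; rewrite !EFinM -muE; exact: h.
Qed.

Lemma nu_hi (x : X) (r : R) : S x -> 0 < r <= 1 ->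
  (nu (B x r) <= (k2 * fine (mu (B x r)) * r `^ (- th))%:E)%E.
Proof.
move=> Sx hr; rewrite hnu; last exact: mB.
have [_ h] := hadr Sx hr; rewrite !EFinM -muE; exact: h.
Qed.

Lemma DM (x : X) (r t : R) : 0 < r -> r <= 1 -> t <= 2^+m * r ->
  (mu (B x t) <= (D^+m)%:E * mu (B x r))%E.
Proof. exact: (@dblm _ _ _ d mu D m mB D1 hD x r t). Qed.

Lemma DMf (x : X) (r t : R) : 0 < r -> r <= 1 -> t <= 2^+m * r ->
  fine (mu (B x t)) <= D^+m * fine (mu (B x r)).
Proof.
move=> r0 r1 tr; have := DM x r0 r1 tr.
by rewrite (muE x t) (muE x r) -EFinM lee_fin.
Qed.

Lemma m16 : 16 <= 2^+m :> R.
Proof. by apply: le_trans hm16; rewrite ler_peMr // ?hc. Qed.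


Variables (M : nat) (xs : 'I_M -> X) (rs : 'I_M -> R) (z : 'I_M -> X) (k : 'I_M -> nat)
  (f : X -> R).
Hypothesis rs0 : forall i, 0 < rs i.
Hypothesis hdisj : forall i j, i != j -> B (xs i) (rs i) `&` B (xs j) (rs j) = set0.
Hypothesis h8 : forall i, 8 * c * rs i <= 1.
Hypothesis hz : forall i, B (xs i) (c * rs i) (z i) /\ S (z i).
Hypothesis hk : forall i, (1 <= k i)%N /\ 4 * c * rs i <= (2^+(k i))^-1 /\
  (2^+(k i))^-1 < 8 * c * rs i.
Hypothesis mf : measurable_fun setT f.

Let N := D^+m.
Let K := k2 * N / k1.
Let rho (j : nat) : R := 2 `^ (- j%:R).
Let g (j : nat) (y : X) := (Eosc nu f (B y (rho j)) `^ p)%E.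
Let A i := B (z i) (c * rs i) `&` S.
Let E i := Eosc nu f (B (xs i) (2 * c * rs i)).
Let a i := (((K^-1)%:E * E i) `^ p)%E.

Lemma N1 : 1 <= N.
Proof. by rewrite /N exprn_ege1. Qed.

Lemma N0 : 0 < N.
Proof. exact: lt_le_trans ltr01 N1. Qed.

Lemma K0 : 0 < K.
Proof. by rewrite /K divr_gt0 // mulr_gt0 // N0. Qed.

Lemma rhoE j : rho j = (2^+j)^-1.
Proof. by rewrite /rho powR_invn. Qed.

Lemma cr0 i : 0 < c * rs i.
Proof. by rewrite mulr_gt0 ?c0. Qed.

Lemma cr1 i : c * rs i <= 1.
Proof. have := h8 i; have := cr0 i; lra. Qed.

Lemma rho0 j : 0 < rho j.
Proof. by rewrite rhoE invr_gt0 exprn_gt0. Qed.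

Lemma rho_le1 i : rho (k i) <= 1.
Proof. rewrite rhoE; have [_ [_ h]] := hk i; have := h8 i; lra. Qed.

Lemma claim2 i y : A i y -> (a i <= g (k i) y)%E.
Proof.
move=> [hy hyS].
have [hxz hzS] := hz i.
have [_ [hk1 hk2]] := hk i.
rewrite -rhoE in hk1 hk2.
set r := rs i in hxz hy hk1 hk2 *; set rh := rho (k i) in hk1 hk2 *.
have r0 : 0 < r := rs0 i.
have cr00 : 0 < c * r := cr0 i.
have crr1 : c * r <= 1 := cr1 i.
have rh0 : 0 < rh := rho0 (k i).
have rh1 : rh <= 1 := rho_le1 i.
have hy' : d y (z i) <= c * r by rewrite dsym; exact: hy.
have hxz' : d (z i) (xs i) <= c * r by rewrite dsym; exact: hxz.
have hxz'' : d (xs i) (z i) <= c * r by exact: hxz.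
have GG : B (xs i) (2 * c * r) `<=` B y rh.
  move=> w hw; have hw' : d (xs i) w <= 2 * c * r by exact: hw.
  have t1 := dtri y (z i) w; have t2 := dtri (z i) (xs i) w.
  rewrite /cball /=; lra.
have ZG : B (z i) (c * r) `<=` B (xs i) (2 * c * r).
  move=> w hw; have hw' : d (z i) w <= c * r by exact: hw.
  have t1 := dtri (xs i) (z i) w.
  rewrite /cball /=; lra.
have hcr : 0 < c * r <= 1 by rewrite cr00 crr1.
have hrh : 0 < rh <= 1 by rewrite rh0 rh1.
have nuZ := nu_lo hzS hcr.
have nuY := nu_hi hyS hrh.
have nuZG : (nu (B (z i) (c * r)) <= nu (B (xs i) (2 * c * r)))%E.
  by apply: le_measure => //; rewrite inE; exact: mB.
have nuGG : (nu (B (xs i) (2 * c * r)) <= nu (B y rh))%E.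
  by apply: le_measure => //; rewrite inE; exact: mB.
have mz0 := muf_gt0 (z i) cr00.
have my0 := muf_gt0 y rh0.
have lo0 : 0 < k1 * fine (mu (B (z i) (c * r))) * (c * r) `^ (- th).
  by rewrite !mulr_gt0 // powR_gt0.
have G0 : (0 < nu (B (xs i) (2 * c * r)))%E.
  apply: lt_le_trans nuZG; apply: lt_le_trans nuZ; by rewrite lte_fin.
have G'fin : (nu (B y rh) < +oo)%E by apply: le_lt_trans nuY _; exact: ltry.
have Gfin : (nu (B (xs i) (2 * c * r)) < +oo)%E by exact: le_lt_trans nuGG G'fin.
have hE := Eosc_mono (mB _ _) (mB _ _) GG G0 G'fin mf.
set lam := (fine (nu (B y rh)) / fine (nu (B (xs i) (2 * c * r)))) in hE.
have fG' : fine (nu (B y rh)) <= k2 * fine (mu (B y rh)) * rh `^ (- th).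
  rewrite -lee_fin fineK //; rewrite ge0_fin_numE //; exact: measure_ge0.
have fG : k1 * fine (mu (B (z i) (c * r))) * (c * r) `^ (- th) <= fine (nu (B (xs i) (2 * c * r))).
  rewrite -lee_fin fineK //; first exact: le_trans nuZ nuZG.
  rewrite ge0_fin_numE //; exact: measure_ge0.
have myz : fine (mu (B y rh)) <= N * fine (mu (B (z i) (c * r))).
  apply: le_trans (DMf (z i) cr00 crr1 (t := c * r + rh) _).
    rewrite -lee_fin -!muE; apply: le_measure; rewrite ?inE; try exact: mB.
    move=> w hw; have hw' : d y w <= rh by exact: hw.
    have t1 := dtri (z i) y w; have hzy : d (z i) y <= c * r by exact: hy.
    rewrite /cball /=; lra.
  have h16 : 16 * (c * r) <= 2^+m * (c * r).
    apply: ler_wpM2r; [exact: ltW | exact: m16].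
  lra.
have s12 : rh `^ (- th) <= (c * r) `^ (- th).
  rewrite !powRN lef_pV2 ?posrE ?powR_gt0 //.
  apply: ge0_ler_powR; rewrite ?nnegrE ?ltW //; lra.
have lamK : lam <= K.
  have fG0 : 0 < fine (nu (B (xs i) (2 * c * r))) by exact: lt_le_trans lo0 fG.
  rewrite /lam ler_pdivrMr // /K.
  apply: (le_trans fG').
  apply: (@le_trans _ _ (k2 * N * fine (mu (B (z i) (c * r))) * (c * r) `^ (- th))).
    rewrite -!mulrA; apply: ler_wpM2l; first exact: ltW.
    rewrite mulrA; apply: ler_pM; rewrite ?powR_ge0 ?muf_ge0 //.
  have -> : k2 * N * fine (mu (B (z i) (c * r))) * (c * r) `^ (- th) =
     k2 * N / k1 * (k1 * fine (mu (B (z i) (c * r))) * (c * r) `^ (- th)).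
    by field; rewrite gt_eqF.
  apply: ler_wpM2l => //; apply: divr_ge0; last exact: ltW.
  by apply: mulr_ge0; apply: ltW => //; exact: N0.
have lam0 : 0 <= lam by rewrite /lam divr_ge0 // fine_ge0 // measure_ge0.
have hE2 : (E i <= K%:E * Eosc nu f (B y rh))%E.
  apply: (le_trans hE); apply: lee_wpmul2r; first exact: Eosc_ge0.
  by rewrite lee_fin.
have hE3 : ((K^-1)%:E * E i <= Eosc nu f (B y rh))%E.
  by rewrite lee_pdivrMl // K0.
rewrite /a /g; apply: poweR_le; first exact: ltW p0.
- by rewrite mule_ge0 // ?Eosc_ge0 // lee_fin invr_ge0 ltW // K0.
- exact: hE3.
Qed.

Let K' := N * K `^ p * (8 * c) `^ p / k1.
Let w (j : nat) : R := 2 `^ (j%:R * (1 - th / p) * p).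

Lemma a_ge0 i : (0 <= a i)%E.
Proof. exact: poweR_ge0. Qed.

Lemma claim1 i : (mu (B (xs i) (rs i)) * ((rs i `^ p)^-1)%:E * (E i `^ p)
   <= (K' * w (k i))%:E * (a i * nu (A i)))%E.
Proof.
have [hxz hzS] := hz i.
have [_ [hk1 hk2]] := hk i.
set r := rs i in hxz hk1 hk2 *.
set W : R := 2^+(k i) in hk1 hk2 *.
have r0 : 0 < r := rs0 i.
have cr00 : 0 < c * r := cr0 i.
have crr1 : c * r <= 1 := cr1 i.
have W0 : 0 < W by rewrite /W exprn_gt0.
have hw : w (k i) = W `^ (p - th).
  rewrite /w /W -powR_mulrn // -powRrM; congr (_ `^ _).
  by field; rewrite gt_eqF // p0.
have hEp : (E i `^ p = (K `^ p)%:E * a i)%E.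
  have -> : E i = (K%:E * ((K^-1)%:E * E i))%E.
    by rewrite muleA -EFinM mulfV ?gt_eqF ?K0 // mul1e.
  rewrite poweRM ?poweR_EFin //; first by rewrite lee_fin ltW // K0.
  by rewrite mule_ge0 ?Eosc_ge0 // lee_fin invr_ge0 ltW // K0.
have hA : nu (A i) = nu (B (z i) (c * r)) by rewrite /A nuIS //; exact: mB.
have hcr : 0 < c * r <= 1 by rewrite cr00 crr1.
have hlo := nu_lo hzS hcr.
set ga := k1 * fine (mu (B (z i) (c * r))) * (c * r) `^ (- th) in hlo.
have mz0 := muf_gt0 (z i) cr00.
have hrc : r <= c * r by rewrite ler_peMl // ltW.
have mBz : fine (mu (B (xs i) r)) <= N * fine (mu (B (z i) (c * r))).
  apply: le_trans (DMf (z i) cr00 crr1 (t := 2 * (c * r)) _).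
    rewrite -lee_fin -!muE; apply: le_measure; rewrite ?inE; try exact: mB.
    move=> y hy; have hy' : d (xs i) y <= r by exact: hy.
    have t1 := dtri (z i) (xs i) y; have hzx : d (z i) (xs i) <= c * r.
      by rewrite dsym; exact: hxz.
    rewrite /cball /=; lra.
  have h16 : 16 * (c * r) <= 2^+m * (c * r).
    apply: ler_wpM2r; [exact: ltW | exact: m16].
  lra.
have hWa : c * r * W <= 1.
  have : 4 * c * r * W <= 1 by rewrite -(ler_pM2r W0) mulVf ?gt_eqF // in hk1.
  have : 0 < c * r * W by rewrite mulr_gt0.
  lra.
have hWb : 1 <= 8 * c * W * r.
  have : 1 < 8 * c * r * W by rewrite -(ltr_pM2r W0) mulVf ?gt_eqF // in hk2.
  have -> : 8 * c * W * r = 8 * c * r * W by ring.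
  lra.
have key := key_real th0 thp c0 r0 W0 hWa hWb.
have real : fine (mu (B (xs i) r)) * (r `^ p)^-1 * K `^ p <= K' * W `^ (p - th) * ga.
  have -> : K' * W `^ (p - th) * ga =
      (N * fine (mu (B (z i) (c * r)))) * ((8 * c) `^ p * W `^ (p - th) * (c * r) `^ (- th))
      * K `^ p.
    by rewrite /K' /ga; field; rewrite gt_eqF.
  apply: ler_wpM2r; first exact: powR_ge0.
  apply: ler_pM; [exact: muf_ge0 | by rewrite invr_ge0 powR_ge0 | exact: mBz | exact: key].
rewrite hEp hw (muE (xs i) r) hA.
apply: (@le_trans _ _ ((K' * W `^ (p - th) * ga)%:E * a i)%E).
  rewrite muleA -!EFinM; apply: lee_wpmul2r; [exact: poweR_ge0 | by rewrite lee_fin].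
rewrite EFinM -muleA; apply: lee_wpmul2l.
  rewrite lee_fin mulr_ge0 ?powR_ge0 //.
  by rewrite /K' !mulr_ge0 ?powR_ge0 ?invr_ge0 ?ltW // N0.
rewrite (muleC (ga%:E)); apply: lee_pmul => //.
- exact: poweR_ge0.
- by rewrite lee_fin /ga !mulr_ge0 ?powR_ge0 ?muf_ge0 ?ltW.
Qed.

Lemma rs1 i : rs i <= 1.
Proof.
have := h8 i; have := rs0 i; have : rs i <= c * rs i by rewrite ler_peMl // ltW.
have : 0 < c * rs i := cr0 i. lra.
Qed.

Lemma count_le j y : \sum_(i < M | k i == j) \1_(A i) y <= N.
Proof.
set rh := rho j.
have rh0 : 0 < rh := rho0 j.
have mass0 := muf_gt0 y rh0.
set mass := fine (mu (B y rh)) in mass0 *.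
have Ab i : k i == j -> A i y ->
   mass <= N * fine (mu (B (xs i) (rs i))) /\ B (xs i) (rs i) `<=` B y rh.
  move=> /eqP kij [hy _].
  have [hxz _] := hz i.
  have [_ [hk1 hk2]] := hk i.
  rewrite -rhoE kij -/rh in hk1 hk2.
  have r0 := rs0 i; have cr00 := cr0 i.
  have hrc : rs i <= c * rs i by rewrite ler_peMl // ltW.
  have hy' : d y (z i) <= c * rs i by rewrite dsym; exact: hy.
  have hxz' : d (xs i) (z i) <= c * rs i by exact: hxz.
  split.
    apply: (le_trans _ (DMf (xs i) r0 (rs1 i) (t := rh + 2 * (c * rs i)) _)).
      rewrite -lee_fin -!muE; apply: le_measure; rewrite ?inE; try exact: mB.
      move=> w0 hw; have hw' : d y w0 <= rh by exact: hw.
      have t1 := dtri (xs i) (z i) w0; have t2 := dtri (z i) y w0.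
      rewrite (dsym (z i) y) in t2.
      rewrite /cball /=; lra.
    have h16 : 16 * (c * rs i) <= 2^+m * rs i.
      rewrite mulrA; apply: ler_wpM2r; [exact: ltW | exact: hm16].
    lra.
  move=> w0 hw; have hw' : d (xs i) w0 <= rs i by exact: hw.
  have t1 := dtri y (z i) w0; have t2 := dtri (z i) (xs i) w0.
  rewrite (dsym (z i) (xs i)) in t2.
  rewrite /cball /=; lra.
have H1 : \sum_(i < M | k i == j) (\1_(A i) y * mass) <=
    N * \sum_(i < M | (k i == j) && (y \in A i)) fine (mu (B (xs i) (rs i))).
  rewrite big_mkcondr /= mulr_sumr; apply: ler_sum => i kij.
  rewrite /indic; case: ifP => hyA.
    by rewrite mul1r; have [] := Ab i kij (set_mem hyA).
  by rewrite mul0r mulr0.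
have H2 : \sum_(i < M | (k i == j) && (y \in A i)) fine (mu (B (xs i) (rs i))) <= mass.
  rewrite -lee_fin -sumEFin.
  under eq_bigr do rewrite -muE.
  rewrite /mass -muE -measure_bigsetU_ord.
  - apply: le_measure; rewrite ?inE; try exact: mB.
      by apply: bigsetU_measurable => i _; exact: mB.
    apply: (big_ind (fun U => U `<=` B y rh)) => [|U V hU hV|i /andP [kij hyA]].
    + exact: sub0set.
    + by move=> w0 [/hU|/hV].
    + by have [] := Ab i kij (set_mem hyA).
  - by move=> i; exact: mB.
  - move=> i i' _ _ [w0 hw]; apply/eqP; apply/negPn/negP => /hdisj h.
    by rewrite h in hw.
have H3 : (\sum_(i < M | k i == j) \1_(A i) y) * mass <= N * mass.
  rewrite mulr_suml; apply: le_trans H1 _.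
  by apply: ler_wpM2l => //; exact: ltW N0.
by rewrite -(ler_pM2r mass0).
Qed.

Lemma mA i : measurable (A i).
Proof. exact: measurableI (mB _ _) mS. Qed.

Lemma ind_ge0 (U : set X) (y : X) : 0 <= \1_U y :> R.
Proof. by rewrite /indic ler0n. Qed.

Lemma g_ge0 j y : (0 <= g j y)%E.
Proof. exact: poweR_ge0. Qed.

Lemma claim3 j : (\sum_(i < M | k i == j) a i * nu (A i) <= N%:E * \int[nu]_(y in S) g j y)%E.
Proof.
pose h y := (\sum_(i < M | k i == j) (((N^-1)%:E * a i) * (\1_(A i) y)%:E))%E.
have cge0 i : (0 <= (N^-1)%:E * a i)%E.
  by rewrite mule_ge0 ?poweR_ge0 // lee_fin invr_ge0 ltW // N0.
have h0 y : (0 <= h y)%E.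
  by apply: sume_ge0 => i _; rewrite mule_ge0 // lee_fin ind_ge0.
have hle y : S y -> (h y <= g j y)%E.
  move=> Sy.
  apply: (@le_trans _ _ (\sum_(i < M | k i == j) ((N^-1)%:E * ((\1_(A i) y)%:E * g j y)))%E).
    apply: lee_sum => i /eqP kij.
    rewrite /indic; case hyA : (y \in A i); rewrite ?mulr1n ?mulr0n.
      rewrite mule1 mul1e; apply: lee_wpmul2l; first by rewrite lee_fin invr_ge0 ltW // N0.
      rewrite -kij; exact: claim2 (set_mem hyA).
    by rewrite ?mule0 ?mul0e ?mule0.
  rewrite -ge0_sume_distrr; last by move=> i _; rewrite mule_ge0 ?g_ge0 // lee_fin ind_ge0.
  rewrite -ge0_sume_distrl; last by move=> i _; rewrite lee_fin ind_ge0.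
  rewrite sumEFin muleA -EFinM.
  rewrite -[X in (_ <= X)%E]mul1e; apply: lee_wpmul2r; first exact: g_ge0.
  rewrite lee_fin ler_pdivrMl ?N0 // mulr1; exact: count_le.
have hint : (\int[nu]_(y in S) h y = \sum_(i < M | k i == j) ((N^-1)%:E * a i) * nu (A i))%E.
  rewrite /h; under eq_integral => y _ do rewrite big_mkcond.
  rewrite ge0_integral_sum //; first last.
  - by move=> i y _; case: ifP => // _; rewrite mule_ge0 // lee_fin ind_ge0.
  - move=> i; case: (k i == j) => /=; last exact: measurable_cst.
    apply: emeasurable_funM; first exact: measurable_cst.
    by apply/measurable_EFinP; apply: measurable_indic; exact: mA.
  - exact: mS.
  rewrite [in RHS]big_mkcond; apply: eq_bigr => i _.
  case: (k i == j) => /=; last exact: integral0.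
  rewrite ge0_integralZl //.
  - rewrite integral_indic ?(nuIS (mA i)) //; [exact: mS | exact: mA].
  - exact: mS.
  - by apply: measurableT_comp => //; apply: measurable_indic; exact: mA.
have e : (\sum_(i < M | k i == j) a i * nu (A i) =
          N%:E * \sum_(i < M | k i == j) ((N^-1)%:E * a i) * nu (A i))%E.
  rewrite ge0_sume_distrr; last by move=> i _; rewrite mule_ge0 ?measure_ge0 ?cge0.
  by apply: eq_bigr => i _; rewrite !muleA -EFinM mulfV ?gt_eqF ?N0 // mul1e.
rewrite e -hint; apply: lee_wpmul2l; first by rewrite lee_fin ltW // N0.
exact: le_integral_nm.
Qed.

Lemma main_bound :
  (\sum_(i < M) (mu (B (xs i) (rs i)) * ((rs i `^ p)^-1)%:E *
                 (Eosc nu f (B (xs i) (2 * c * rs i)) `^ p))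
   <= ((D^+m * (k2 * D^+m / k1) `^ p * (8 * c) `^ p / k1) * D^+m)%:E *
      \sum_(1 <= j <oo) ((2 `^ (j%:R * (1 - th / p) * p))%:E *
         \int[nu]_(y in S) (Eosc nu f (B y (2 `^ (- j%:R))) `^ p)))%E.
Proof.
have K'0 : 0 <= K' by rewrite /K' !mulr_ge0 ?powR_ge0 ?invr_ge0 ?ltW // N0.
have w0 j : 0 <= w j by exact: powR_ge0.
have int0 j : (0 <= \int[nu]_(y in S) g j y)%E by apply: integral_ge0 => y _; exact: g_ge0.
pose F i := ((K' * w (k i))%:E * (a i * nu (A i)))%E.
apply: (@le_trans _ _ (\sum_(i < M) F i)%E).
  by apply: lee_sum => i _; exact: claim1.
pose K0 := (\max_(i < M) k i).+1.
have hkK i : (k i < K0)%N by rewrite ltnS; exact: leq_bigmax.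
rewrite (partition_big (fun i => (inord (k i) : 'I_K0)) xpredT) //=.
pose H (j : nat) := (if j == 0%N then 0 else (K' * w j)%:E * (N%:E * \int[nu]_(y in S) g j y))%E.
apply: (@le_trans _ _ (\sum_(jj < K0) H jj)%E).
  apply: lee_sum => jj _.
  rewrite (eq_bigl (fun i => k i == jj)); last first.
    by move=> i /=; rewrite -val_eqE /= inordK.
  rewrite /H; case: eqP => hj.
    rewrite big_pred0 // => i; apply/negbTE; rewrite hj.
    by have [h _] := hk i; rewrite -lt0n.
  rewrite (eq_bigr (fun i => (K' * w jj)%:E * (a i * nu (A i)))%E); last first.
    by move=> i /eqP kij; rewrite /F kij.
  rewrite -ge0_sume_distrr; last by move=> i _; rewrite mule_ge0 ?poweR_ge0 ?measure_ge0.
  apply: lee_wpmul2l; first by rewrite lee_fin mulr_ge0.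
  exact: claim3.
rewrite -(big_mkord xpredT) big_ltn // /H eqxx add0e.
rewrite (@eq_big_nat _ _ _ 1 K0 _ (fun j => ((K' * N)%:E * ((w j)%:E * \int[nu]_(y in S) g j y))%E)); last first.
  move=> j /andP [hj _]; rewrite -(prednK hj) /=.
  by rewrite !muleA -!EFinM mulrAC.
rewrite -ge0_sume_distrr; last by move=> j _; rewrite mule_ge0 // lee_fin.
apply: lee_wpmul2l; first by rewrite lee_fin mulr_ge0 // ltW // N0.
apply: nneseries_lim_ge => j _ _.
by rewrite mule_ge0 // lee_fin.
Qed.

End Main.

Unset Implicit Arguments.
Set Strict Implicit.

Theorem lemma3p18 (R : realType) (disp : measure_display) (X : measurableType disp)
  (d : X -> X -> R) (mu : {measure set X -> \bar R}) (p theta2 : R) (S2 : set X)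
  (nu : {measure set X -> \bar R}) :
  is_metric d -> d_complete d -> d_separable d -> d_borel d ->
  (forall x r, (mu (cball d x r) < +oo)%E) ->
  (forall x r, 0 < r -> (0 < mu (cball d x r))%E) ->
  unif_loc_doubling d mu ->
  1 < p ->
  loc_poincare d mu p ->
  0 < theta2 -> theta2 < p -> (theta2%:E < lowQ d mu)%E ->
  ADR d mu theta2 S2 ->
  (forall E, measurable E -> nu E = Hmeas d mu theta2 (E `&` S2)) ->
  forall c : R, 1 <= c ->
  exists C : R, 0 < C /\
    forall (M : nat) (xs : 'I_M -> X) (rs : 'I_M -> R),
      nice_family d S2 c xs rs ->
      (forall i, 8 * c * rs i <= 1) ->
      forall f : X -> R, in_Lp nu p f ->
        (\sum_(i < M)
           (mu (cball d (xs i) (rs i)) * ((rs i `^ p)^-1)%:E *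
            (Eosc nu f (cball d (xs i) (2 * c * rs i)) `^ p))
         <= C%:E * (besov_norm d nu S2 (1 - theta2 / p) p f `^ p))%E.
Proof.
move=> hm _ _ hb hfin hpos hdoub hp1 _ th0 thp _ [hSc [k1 [k2 [k10 [k20 hadr]]]]] hnu c hc.
have p0 : 0 < p by apply: lt_trans hp1.
have [m hm16] := exists_pow2 (16 * c).
have h2m : (0:R) < 2^+m by rewrite exprn_gt0.
have [D0 hD0] := hdoub (2^+m) h2m.
pose D := Num.max D0 1.
have D1 : 1 <= D by rewrite le_max lexx orbT.
have hD : forall (x : X) (r : R), 0 < r <= 2^+m ->
    (mu (cball d x (2 * r)) <= D%:E * mu (cball d x r))%E.
  move=> x r hr; apply: le_trans (hD0 r x hr) _.
  apply: lee_wpmul2r => //; rewrite lee_fin le_max lexx //.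
have DM0 : 0 < D^+m by rewrite exprn_gt0 // (lt_le_trans ltr01 D1).
exists ((D^+m * (k2 * D^+m / k1) `^ p * (8 * c) `^ p / k1) * D^+m).
split.
  by rewrite !mulr_gt0 ?invr_gt0 ?powR_gt0 ?divr_gt0 ?mulr_gt0 // (lt_le_trans ltr01 hc).
move=> M xs rs [rs0 hdisj rs1 hnice] h8 f [mf _].
have [z hz] := @choice _ _ (fun i y => cball d (xs i) (c * rs i) y /\ S2 y)
  (fun i => let: ex_intro y hy := hnice i in ex_intro _ y hy).
have c0 : 0 < c by apply: lt_le_trans hc.
have hk0 : forall i, exists kk : nat,
    (0 < kk)%N /\ 4 * c * rs i <= 2 ^- kk /\ 2 ^- kk < 8 * c * rs i.
  move=> i.
  have a0 : 0 < 4 * c * rs i by rewrite !mulr_gt0.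
  have a2 : 2 * (4 * c * rs i) <= 1 by have := h8 i; lra.
  have [kk [h1 [h2 h3]]] := exists_scale a0 a2.
  exists kk; split => //; split => //; lra.
have [k hk] := choice hk0.
have MB := main_bound hm hb hfin hpos hp1 th0 thp hSc k10 k20 hadr hnu hc hm16 D1 hD
  rs0 hdisj h8 hz hk mf.
apply: (le_trans MB).
apply: lee_wpmul2l.
  by rewrite lee_fin !mulr_ge0 ?invr_ge0 ?powR_ge0 ?ltW // (lt_le_trans ltr01 hc).
rewrite /besov_norm.
set T := (\sum_(1 <= j <oo) _)%E.
set I := (\int[nu]_(x in S2) _)%E.
have T0 : (0 <= T)%E.
  apply: nneseries_ge0 => j _ _; apply: mule_ge0; first by rewrite lee_fin powR_ge0.
  by apply: integral_ge0 => y _; exact: poweR_ge0.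
have eT : T = ((T `^ p^-1) `^ p)%E.
  by rewrite -poweRrM mulVf ?gt_eqF // poweRe1.
rewrite {1}eT.
apply: poweR_le; first exact: ltW.
  exact: poweR_ge0.
by apply: leeDr; exact: poweR_ge0.
Qed.
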